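(* Let $G=(V,E,C,\ell)$ be an edge-labeled hypergraph with maximum hyperedge size $r$. Let $Y_{\mathrm{MV}}$ be a majority-vote clustering: for each node $u$, $Y_{\mathrm{MV}}[u]$ is a category $c$ maximizing the number of hyperedges $e\ni u$ with $\ell(e)=c$ (ties broken arbitrarily). Then $\mathrm{CatEdgeClus}(Y_{\mathrm{MV}})\le r\cdot\min_{Y:V\to C}\mathrm{CatEdgeClus}(Y)$.
   Context: An edge-labeled hypergraph $G=(V,E,C,\ell)$ consists of a finite node set $V$, a finite collection $E$ of hyperedges (nonempty subsets of $V$), a finite set $C$ of categories, and a labeling $\ell:E\to C$; $r=\max_{e\in E}|e|$. A clustering is a map $Y:V\to C$. For $e\in E$, $m_Y(e)=1$ if $Y[i]\neq\ell(e)$ for some $i\in e$, and $m_Y(e)=0$ otherwise; $\mathrm{CatEdgeClus}(Y)=\sum_{e\in E}m_Y(e)$. *)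

(* Defs.v *)
From mathcomp Require Import all_boot all_order.
Set Implicit Arguments. Unset Strict Implicit. Unset Printing Implicit Defensive.

(* An edge-labeled hypergraph: nodes V : finType, categories C : finType,
   hyperedges indexed by a finite type I (a finite collection, repetitions
   allowed), with hyperedge sets [edge i] and labels [lab i]. *)

Definition max_edge_size (V I : finType) (edge : I -> {set V}) : nat :=
  \max_(i : I) #|edge i|.

Definition mistake (V C I : finType) (edge : I -> {set V}) (lab : I -> C)
  (Y : V -> C) (i : I) : bool :=
  [exists v in edge i, Y v != lab i].

Definition CatEdgeClus (V C I : finType) (edge : I -> {set V}) (lab : I -> C)
  (Y : V -> C) : nat :=
  \sum_(i : I) (mistake edge lab Y i : nat).

Definition deg_cat (V C I : finType) (edge : I -> {set V}) (lab : I -> C)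
  (u : V) (c : C) : nat :=
  #|[set i : I | (u \in edge i) && (lab i == c)]|.

Definition majority_vote (V C I : finType) (edge : I -> {set V}) (lab : I -> C)
  (Y : V -> C) : Prop :=
  forall (u : V) (c : C), deg_cat edge lab u c <= deg_cat edge lab u (Y u).

(* Main.v *)
Require Import Defs.
From mathcomp Require Import all_boot all_order.
Set Implicit Arguments. Unset Strict Implicit.

Section Aux.
Variables (V C I : finType) (edge : I -> {set V}) (lab : I -> C).

Definition F (Z : V -> C) (i : I) (v : V) : nat := ((v \in edge i) && (Z v != lab i)).

Lemma lemA Z : CatEdgeClus edge lab Z <= \sum_i \sum_v F Z i v.
Proof.
rewrite /CatEdgeClus; apply: leq_sum => i _.
case: (boolP (mistake edge lab Z i)) => //= /existsP [v /andP [Hv Hz]].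
by rewrite (bigD1 v) //= /F Hv Hz.
Qed.

Lemma lemB Z : \sum_i \sum_v F Z i v <= max_edge_size edge * CatEdgeClus edge lab Z.
Proof.
rewrite /CatEdgeClus big_distrr /=; apply: leq_sum => i _.
case: (boolP (mistake edge lab Z i)) => /= H.
  rewrite muln1; apply: leq_trans (leq_bigmax i).
  rewrite -sum1_card.
  apply: leq_trans (_ : \sum_v ((v \in edge i) : nat) <= _).
    by apply: leq_sum => v _; rewrite /F; case: (v \in edge i); rewrite /= ?leq_b1.
  by rewrite [X in _ <= X]big_mkcond /=; apply: leq_sum => v _; case: (v \in edge i).
rewrite muln0 leqn0; apply/eqP; apply: big1 => v _.
rewrite /F; case: (boolP (v \in edge i)) => //= Hv.
by case: (boolP (Z v != lab i)) => // Hz; case/negP: H; apply/existsP; exists v; rewrite Hv.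
Qed.

Lemma lemD v c : \sum_i ((v \in edge i) && (c != lab i) : nat) + deg_cat edge lab v c
   = \sum_i ((v \in edge i) : nat).
Proof.
rewrite /deg_cat -sum1_card [X in _ + X]big_mkcond /= -big_split /=.
apply: eq_bigr => i _; rewrite inE eq_sym.
by case: (v \in edge i); case: (lab i == c).
Qed.

End Aux.

Theorem mainTheorem9 (V C I : finType) (edge : I -> {set V}) (lab : I -> C)
  (Hne : forall i : I, edge i != set0)
  (Ymv : V -> C) (Hmv : majority_vote edge lab Ymv) :
  forall Y : V -> C,
    CatEdgeClus edge lab Ymv <= max_edge_size edge * CatEdgeClus edge lab Y.
Proof.
move=> Y.
apply: leq_trans (lemA edge lab Ymv) _.
apply: leq_trans (lemB edge lab Y).
rewrite (exchange_big _ _ _ _ _ (F edge lab Ymv)) (exchange_big _ _ _ _ _ (F edge lab Y)) /=.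
apply: leq_sum => v _.
have H1 := lemD edge lab v (Ymv v).
have H2 := lemD edge lab v (Y v).
have H3 := Hmv v (Y v).
rewrite /F.
rewrite -(leq_add2r (deg_cat edge lab v (Ymv v))) H1.
apply: leq_trans (_ : _ <= \sum_i ((v \in edge i) && (Y v != lab i) : nat) + deg_cat edge lab v (Y v)) _.
  by rewrite H2.
by rewrite leq_add2l.
Qed.
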